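(* Let $r_i:\mathbb{R}^n\to\mathbb{R}$, $i=1,\dots,m$, be twice continuously differentiable, $f(x)=\sum_{i=1}^m|r_i(x)|$, and for $z=(x,\mu)\in\mathbb{R}^n\times\mathbb{R}$ with $\mu\ne0$ let $$s_i(x,\mu)=\mu^2\ln\Big[\exp\Big(\tfrac{r_i(x)}{\mu^2}\Big)+\exp\Big(-\tfrac{r_i(x)}{\mu^2}\Big)\Big],\quad E(z)=\sum_{i=1}^m s_i(x,\mu),\quad E_1(z)=E(z)+\frac{\mu^2\|x\|^2}{2}.$$ Define $\partial^0E_1(z)=\{\nabla E_1(z)\}$ if $\mu\neq0$ and $\partial^0E_1(z)=\{\lim_{\mu\to0}\nabla E_1(x,\mu)\}$ if $\mu=0$, where $\nabla E_1(z)=(\nabla_x E_1(z),\partial E_1(z)/\partial\mu)$. If $0\in\partial^0E_1(z)$, then $\mu=0$ and $x$ is a stationary point of $f$. Moreover, if the $r_i$, $i=1,\dots,m$, are affine functions, then $x$ is a minimizer of $f$ over $\mathbb{R}^n$.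
   Context: A point $x$ is a stationary point of $f$ if $0\in\partial f(x)$, where $\partial f(x)=\{\sum_{i=1}^m\delta_i\nabla r_i(x)\}$ with $\delta_i=\operatorname{sign}(r_i(x))$ if $r_i(x)\neq0$ and $\delta_i\in[-1,1]$ arbitrary if $r_i(x)=0$. *)

(* Defs.v *)
From HB Require Import structures.
From mathcomp Require Import all_boot all_order all_algebra.
From mathcomp Require Import all_classical all_reals all_analysis.
Set Implicit Arguments. Unset Strict Implicit. Unset Printing Implicit Defensive.
Import Order.TTheory GRing.Theory Num.Theory.
Import numFieldNormedType.Exports.
Local Open Scope classical_set_scope.
Local Open Scope ring_scope.

Section Defs.
Variables (R : realType) (n m : nat).

Definition evec (j : 'I_n) : 'rV[R]_n := delta_mx 0 j.

Definition pderiv (g : 'rV[R]_n -> R) (j : 'I_n) (x : 'rV[R]_n) : R :=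
  'D_(evec j) g x.

Definition grad (g : 'rV[R]_n -> R) (x : 'rV[R]_n) : 'rV[R]_n :=
  \row_j pderiv g j x.

Definition C2 (g : 'rV[R]_n -> R) : Prop :=
  continuous g /\
  (forall j x, derivable g x (evec j)) /\
  (forall j, continuous (pderiv g j)) /\
  (forall j k x, derivable (pderiv g j) x (evec k)) /\
  (forall j k, continuous (pderiv (pderiv g j) k)).

Definition sqnorm (x : 'rV[R]_n) : R := \sum_(j < n) x 0 j ^+ 2.

Variable r : 'I_m -> 'rV[R]_n -> R.

Definition fobj (x : 'rV[R]_n) : R := \sum_(i < m) `|r i x|.

Definition s_i (i : 'I_m) (x : 'rV[R]_n) (mu : R) : R :=
  mu ^+ 2 * ln (expR (r i x / mu ^+ 2) + expR (- (r i x / mu ^+ 2))).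

Definition E (x : 'rV[R]_n) (mu : R) : R := \sum_(i < m) s_i i x mu.

Definition E1 (x : 'rV[R]_n) (mu : R) : R := E x mu + mu ^+ 2 * sqnorm x / 2.

Definition gradE1 (x : 'rV[R]_n) (mu : R) : 'rV[R]_n * R :=
  (grad (fun y => E1 y mu) x, derive1 (fun t => E1 x t) mu).

Definition subdiff0 (x : 'rV[R]_n) (mu : R) : set ('rV[R]_n * R) :=
  if mu != 0 then [set gradE1 x mu]
  else [set l | (fun t => gradE1 x t) @ 0^' --> l].

Definition stationary (x : 'rV[R]_n) : Prop :=
  exists delta : 'I_m -> R,
    (forall i, r i x != 0 -> delta i = Num.sg (r i x)) /\
    (forall i, r i x = 0 -> -1 <= delta i <= 1) /\
    \sum_(i < m) delta i *: grad (r i) x = 0.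

End Defs.

Definition affine (R : realType) (n : nat) (g : 'rV[R]_n -> R) : Prop :=
  exists (a : 'rV[R]_n) (b : R), forall x, g x = \sum_(j < n) a 0 j * x 0 j + b.

(* Main.v *)
Require Import Defs.
From HB Require Import structures.
From mathcomp Require Import all_boot all_order all_algebra.
From mathcomp Require Import all_classical all_reals all_analysis.
From mathcomp Require Import ring lra.
Import Order.TTheory GRing.Theory Num.Theory.
Import numFieldNormedType.Exports.
Local Open Scope classical_set_scope.
Local Open Scope ring_scope.
Section H.
Variable R : realType.
Definition th (u : R) := (expR u - expR (- u)) / (expR u + expR (- u)).

Lemma is_derive_LN (k : R -> R) (t0 e : R) : is_derive t0 1 k e ->
  is_derive t0 1 (fun h => ln (expR (k h) + expR (- k h))) (e * th (k t0)).
Proof.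
move=> hk.
have h1 : is_derive t0 1 (expR \o k) (expR (k t0) * e) by apply: is_derive1_comp.
have h2 : is_derive t0 1 (expR \o (- k)) (expR (- k t0) * (- e)).
  by apply: is_derive1_comp; apply: is_deriveN.
have h3 := is_deriveD h1 h2.
have hp : 0 < expR (k t0) + expR (- k t0) by rewrite addr_gt0 // expR_gt0.
have h4 := @is_derive1_comp R (@ln R) _ t0 _ _ (is_derive1_ln hp) h3.
apply: is_derive_eq h4 _.
rewrite /th; field.
by rewrite gt_eqF.
Qed.
End H.
Arguments is_derive_LN {R}.
Arguments th {R}.
Section H2.
Variables (R : realType) (n : nat).
Lemma derive_dir1 (f : 'rV[R]_n -> R) x v :
  'D_v f x = 'D_1 (fun h : R => f (h *: v + x)) 0.
Proof.
rewrite /derive; set g1 := fun h => h^-1 *: _; set g2 := fun h => h^-1 *: _.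
suff -> : g1 = g2 by [].
by rewrite funeqE /g1 /g2 => h /=; rewrite addr0 scale0r add0r [_%:A]mulr1.
Qed.
Lemma is_derive_dir (f : 'rV[R]_n -> R) (x v : 'rV[R]_n) (d : R) :
  is_derive (0:R) (1:R) (fun h : R => f (h *: v + x)) d -> is_derive x v f d.
Proof.
case=> h1 h2; apply: DeriveDef; first exact/derivable1P.
by rewrite derive_dir1.
Qed.
Lemma is_derive_dir' (f : 'rV[R]_n -> R) (x v : 'rV[R]_n) :
  derivable f x v -> is_derive (0:R) (1:R) (fun h : R => f (h *: v + x)) ('D_v f x).
Proof.
move=> /derivable1P h; apply: DeriveDef => //; by rewrite derive_dir1.
Qed.
End H2.
Arguments derive_dir1 {R n}. Arguments is_derive_dir {R n}. Arguments is_derive_dir' {R n}.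
Section H3.
Variable R : realType.

Lemma is_derive_ext (f g : R -> R) (x0 v d : R) :
  (forall h, f h = g h) -> is_derive x0 v f d -> is_derive x0 v g d.
Proof. by move=> /funext ->. Qed.

Lemma is_derive_poly2 (A b c : R) :
  is_derive (0:R) (1:R) (fun h : R => A + b * h + c * h ^+ 2) b.
Proof.
have h1 : is_derive (0:R) (1:R) (fun h : R => A) 0 := is_derive_cst A (0:R) (1:R).
have h2 : is_derive (0:R) (1:R) (b \*: id) (b *: 1) := is_deriveZ b (is_derive_id (0:R) (1:R)).
have h3 : is_derive (0:R) (1:R) (c \*: (id ^+ 2)) (c *: ((2%:R * 0 ^+ 1) *: 1)).
  exact: is_deriveZ (is_deriveX 2 (is_derive_id (0:R) (1:R))).
have h4 := is_deriveD (is_deriveD h1 h2) h3.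
apply: is_derive_ext _ (is_derive_eq h4 _).
  by move=> h /=; rewrite /GRing.scale /= expr2.
by rewrite /GRing.scale /=; lra.
Qed.
End H3.
Arguments is_derive_ext {R}. Arguments is_derive_poly2 {R}.
Section H4.
Variables (R : realType) (n : nat).
Lemma sqnorm_dir (x : 'rV[R]_n) (j : 'I_n) (h : R) :
  sqnorm (h *: evec R j + x) = sqnorm x + (2 * x 0 j) * h + 1 * h ^+ 2.
Proof.
rewrite /sqnorm /evec.
have -> : \sum_(k < n) (h *: delta_mx 0 j + x) 0 k ^+ 2 =
  \sum_(k < n) (x 0 k ^+ 2 + (if k == j then 2 * x 0 j * h + h ^+ 2 else 0)).
  apply: eq_bigr => k _; rewrite !mxE /=.
  case: (eqVneq k j) => [->|/negbTE kj]; last first.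
    by rewrite mulr0 add0r addr0.
  by rewrite mulr1; ring.
rewrite big_split /= -big_mkcond /= big_pred1_eq; ring.
Qed.
End H4.
Arguments sqnorm_dir {R n}.
Section H5.
Variables (R : realType) (n m : nat).
Lemma pderiv_E1 (r : 'I_m -> 'rV[R]_n -> R) (t : R) (j : 'I_n) (x : 'rV[R]_n) :
  t != 0 -> (forall i, derivable (r i) x (evec R j)) ->
  pderiv (fun y => E1 r y t) j x =
  \sum_(i < m) pderiv (r i) j x * th (r i x / t ^+ 2) + t ^+ 2 * x 0 j.
Proof.
move=> t0 hd.
have t20 : t ^+ 2 != 0 by rewrite expf_neq0.
rewrite /pderiv; apply: derive_val; apply: is_derive_dir.
have hs : forall i, is_derive (0:R) (1:R)
    (fun h : R => s_i r i (h *: evec R j + x) t)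
    (pderiv (r i) j x * th (r i x / t ^+ 2)).
  move=> i.
  have hg := is_derive_dir' _ _ _ (hd i).
  have hk := is_deriveZ (t ^+ 2)^-1 hg.
  have hl := is_derive_LN _ _ _ hk.
  have hm := is_deriveZ (t ^+ 2) hl.
  apply: is_derive_ext _ (is_derive_eq hm _).
    move=> h /=; rewrite /s_i /GRing.scale /= [_^-1 * _]mulrC //.
  rewrite /GRing.scale /=.
  have -> : scalemx 0 (evec R j) = 0 by apply/matrixP=> a b; rewrite !mxE mul0r.
  rewrite add0r /pderiv.
  have -> : t ^- 2 *: r i x = r i x / t ^+ 2 by rewrite mulrC.
  by rewrite mulrA mulrA mulfV // mul1r.
have hS := is_derive_sum hs.
have hQ := is_derive_poly2 (t ^+ 2 * sqnorm x / 2) (t ^+ 2 * x 0 j) (t ^+ 2 / 2).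
apply: is_derive_ext _ (is_deriveD hS hQ).
move=> h; rewrite fct_sumE /E1 /E !fctE /= sqnorm_dir; by field.
Qed.
End H5.
Section H6.
Variable R : realType.
Lemma th_lt_ln (u : R) : u * th u < ln (expR u + expR (- u)).
Proof.
have hA := expR_gt0 u; have hB := expR_gt0 (- u).
set A := expR u in hA *; set B := expR (- u) in hB *.
have hP : 0 < A + B by lra.
apply: (@le_lt_trans _ _ `|u|).
  rewrite /th -/A -/B mulrA ler_pdivrMr //.
  case: (lerP 0 u) => hu.
    rewrite ger0_norm //; nra.
  rewrite ltr0_norm //; nra.
rewrite -[X in X < _]expRK ltr_ln ?posrE ?expR_gt0 //.
case: (lerP 0 u) => hu.
  by rewrite ger0_norm // /A; lra.
by rewrite ltr0_norm // /B; lra.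
Qed.
End H6.
Arguments th_lt_ln {R}.
Section H7.
Variables (R : realType) (n m : nat).
Definition Lf (u : R) := ln (expR u + expR (- u)).

Lemma is_derive_si (a t : R) : t != 0 ->
  is_derive t (1:R) (fun s : R => s ^+ 2 * ln (expR (a / s ^+ 2) + expR (- (a / s ^+ 2))))
    (2 * t * (Lf (a / t ^+ 2) - a / t ^+ 2 * th (a / t ^+ 2))).
Proof.
move=> t0.
have t20 : t ^+ 2 != 0 by rewrite expf_neq0.
have hX : is_derive t (1:R) (fun s : R => s ^+ 2) ((2%:R * t ^+ 1) *: 1).
  apply: is_derive_ext _ (is_deriveX 2 (is_derive_id t (1:R))).
  by move=> h; rewrite !fctE.
have hV := @is_deriveV R (fun s : R => s ^+ 2) t _ 1 t20 hX.
have hk := is_deriveZ a hV.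
have hL := is_derive_LN _ _ _ hk.
have hM := is_deriveM hX hL.
apply: is_derive_ext _ (is_derive_eq hM _).
  by move=> h; rewrite !fctE.
rewrite /Lf /GRing.scale /=.
field.
done.
Qed.

Lemma derive_E1_mu (r : 'I_m -> 'rV[R]_n -> R) (x : 'rV[R]_n) (t : R) : t != 0 ->
  derive1 (fun s => E1 r x s) t =
  \sum_(i < m) (2 * t * (Lf (r i x / t ^+ 2) - r i x / t ^+ 2 * th (r i x / t ^+ 2)))
  + t * sqnorm x.
Proof.
move=> t0; rewrite derive1E; apply: derive_val.
have hS := is_derive_sum (fun i => is_derive_si (r i x) t t0).
have hX : is_derive t (1:R) (fun s : R => s ^+ 2) ((2%:R * t ^+ 1) *: 1).
  apply: is_derive_ext _ (is_deriveX 2 (is_derive_id t (1:R))).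
  by move=> h; rewrite !fctE.
have hQ := is_deriveZ (sqnorm x / 2) hX.
apply: is_derive_ext _ (is_derive_eq (is_deriveD hS hQ) _).
  move=> h; rewrite fct_sumE /E1 /E !fctE /= /s_i /GRing.scale /=; congr (_ + _).
  have e : forall q h : R, q / 2 * h ^+ 2 = h ^+ 2 * q / 2 by move=> *; ring.
  exact: e.
congr (_ + _); rewrite /GRing.scale /= mulr1 expr1.
have e : forall q t : R, q / 2 * (2 * t) = t * q by move=> *; field.
exact: e.
Qed.
End H7.
Section H8.
Variable R : realType.
Lemma th0 : th (0:R) = 0.
Proof. by rewrite /th oppr0 subrr mul0r. Qed.

Lemma th_sg_bound (u : R) : u != 0 -> `|th u - Num.sg u| * `|u| <= 1.
Proof.
move=> u0.
have hA := expR_gt0 u; have hB := expR_gt0 (- u).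
have hA1 := expR_ge1Dx u; have hB1 := expR_ge1Dx (- u).
have hAB : expR u * expR (- u) = 1 by rewrite -expRD subrr expR0.
move: hA hB hA1 hB1 hAB.
set A := expR u; set B := expR (- u) => hA hB hA1 hB1 hAB.
have hP : 0 < A + B by lra.
have -> : th u - Num.sg u = (A - B - Num.sg u * (A + B)) / (A + B).
  by rewrite /th -/A -/B; field; rewrite gt_eqF.
rewrite normrM normfV (gtr0_norm hP) mulrAC ler_pdivrMr // mul1r.
case: (ltrgt0P u) u0 => hu // _.
  rewrite ?gtr0_sg ?mul1r ?(gtr0_norm hu) //.
  have -> : A - B - (A + B) = - (2 * B) by ring.
  rewrite normrN gtr0_norm; last by lra.
  nra.
rewrite ?ltr0_sg ?mulN1r ?(ltr0_norm hu) //.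
have -> : A - B - - (A + B) = 2 * A by ring.
rewrite gtr0_norm; last by lra.
nra.
Qed.
End H8.
Arguments th_sg_bound {R}.
Section H9.
Variables (R : realType) (m : nat).
Lemma term_bound (d a t : R) : t != 0 ->
  `|d * (th (a / t ^+ 2) - Num.sg a)| <= t ^+ 2 * (`|d| / `|a|).
Proof.
move=> t0.
have t2 : 0 < t ^+ 2 by rewrite exprn_even_gt0.
have [->|a0] := eqVneq a 0.
  by rewrite mul0r th0 sgr0 subrr mulr0 !normr0 invr0 !mulr0.
have u0 : a / t ^+ 2 != 0 by rewrite mulf_neq0 // invr_eq0 gt_eqF.
have hb := th_sg_bound _ u0.
have hs : Num.sg (a / t ^+ 2) = Num.sg a.
  by rewrite sgrM sgrV (gtr0_sg t2) mulr1.
rewrite hs in hb.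
rewrite normrM [X in _ <= X]mulrCA ler_wpM2l //.
have hu : 0 < `|a / t ^+ 2| by rewrite normr_gt0.
rewrite -(ler_pM2r hu) (le_trans hb) //.
rewrite normrM normfV (gtr0_norm t2).
have na : `|a| != 0 by rewrite normr_eq0.
have -> : t ^+ 2 / `|a| * (`|a| / t ^+ 2) = 1 by field; rewrite t0 na.
done.
Qed.

Lemma grad_bound (d a : 'I_m -> R) (c t : R) : t != 0 ->
  `| (\sum_(i < m) d i * th (a i / t ^+ 2) + t ^+ 2 * c) - \sum_(i < m) Num.sg (a i) * d i |
  <= t ^+ 2 * (\sum_(i < m) `|d i| / `|a i| + `|c|).
Proof.
move=> t0.
have -> : (\sum_(i < m) d i * th (a i / t ^+ 2) + t ^+ 2 * c) - \sum_(i < m) Num.sg (a i) * d i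
  = \sum_(i < m) d i * (th (a i / t ^+ 2) - Num.sg (a i)) + t ^+ 2 * c.
  rewrite addrAC -sumrB; congr (_ + _); apply: eq_bigr => i _; ring.
rewrite mulrDr mulr_sumr (le_trans (ler_normD _ _)) // lerD //.
  rewrite (le_trans (ler_norm_sum _ _ _)) // ler_sum // => i _.
  exact: term_bound.
by rewrite normrM ger0_norm // exprn_even_ge0.
Qed.
End H9.
Section H10.
Variables (R : realType) (n : nat).
Lemma entry_le (M : 'rV[R]_n) (s : R) (j : 'I_n) : `|M 0 j| <= `|(M, s)|.
Proof.
rewrite prod_normE /= le_max; apply/orP; left.
change (`|M 0 j| <= mx_norm M).
rewrite mx_normrE.
exact: (le_bigmax 0 (fun ij : 'I_1 * 'I_n => `|M ij.1 ij.2|) (0, j)).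
Qed.

Lemma lin_dir (a x : 'rV[R]_n) (j : 'I_n) (h : R) :
  \sum_(k < n) a 0 k * (h *: evec R j + x) 0 k = \sum_(k < n) a 0 k * x 0 k + a 0 j * h.
Proof.
rewrite /evec.
have -> : \sum_(k < n) a 0 k * (h *: delta_mx 0 j + x) 0 k =
  \sum_(k < n) (a 0 k * x 0 k + (if k == j then a 0 j * h else 0)).
  apply: eq_bigr => k _; rewrite !mxE /=.
  case: (eqVneq k j) => [->|/negbTE kj]; last by rewrite mulr0 add0r addr0.
  by rewrite mulr1; ring.
by rewrite big_split /= -big_mkcond /= big_pred1_eq.
Qed.

Lemma affine_pderiv (g : 'rV[R]_n -> R) (a : 'rV[R]_n) (b : R) :
  (forall x, g x = \sum_(j < n) a 0 j * x 0 j + b) ->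
  forall x k, pderiv g k x = a 0 k.
Proof.
move=> hg x k; rewrite /pderiv; apply: derive_val; apply: is_derive_dir.
apply: is_derive_ext _ (is_derive_poly2 (\sum_(j < n) a 0 j * x 0 j + b) (a 0 k) 0).
by move=> h; rewrite hg lin_dir; ring.
Qed.

Lemma affine_diff (g : 'rV[R]_n -> R) : affine g ->
  forall x y, g y - g x = \sum_(k < n) pderiv g k x * (y 0 k - x 0 k).
Proof.
case=> a [b hg] x y.
have hp := affine_pderiv _ _ _ hg x.
rewrite (eq_bigr (fun k => a 0 k * (y 0 k - x 0 k))); last by move=> k _; rewrite hp.
rewrite !hg.
have -> : \sum_(k < n) a 0 k * (y 0 k - x 0 k) =
  \sum_(k < n) a 0 k * y 0 k - \sum_(k < n) a 0 k * x 0 k.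
  by rewrite -sumrB; apply: eq_bigr => k _; rewrite mulrBr.
by rewrite opprD addrACA subrr addr0.
Qed.
End H10.
Arguments Lf {R}. Arguments pderiv_E1 {R n m}. Arguments derive_E1_mu {R n m}.
Arguments grad_bound {R m}. Arguments entry_le {R n}. Arguments affine_diff {R n}.

Theorem theorem1 (R : realType) (n m : nat) (hm : (0 < m)%N)
  (r : 'I_m -> 'rV[R]_n -> R) (hr : forall i, C2 (r i))
  (x : 'rV[R]_n) (mu : R) :
  subdiff0 r x mu 0 ->
  mu = 0 /\ stationary r x /\
  ((forall i, affine (r i)) -> forall y, fobj r x <= fobj r y).
Proof.
move=> H.
have hder : forall i j, derivable (r i) x (evec R j).
  by move=> i j; case: (hr i) => _ [+ _]; apply.
have mu0 : mu = 0.
  apply/eqP; apply: contraT => mu0.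
  move: H; rewrite /subdiff0 mu0 /= => H.
  have H2 : derive1 (fun s => E1 r x s) mu = 0 by rewrite -[RHS]/((0 : 'rV[R]_n * R).2) H.
  move: H2; rewrite derive_E1_mu //.
  set S := \sum_(i < m) _.
  have -> : S = mu * \sum_(i < m) (2 * (Lf (r i x / mu ^+ 2) - r i x / mu ^+ 2 * th (r i x / mu ^+ 2))).
    by rewrite mulr_sumr; apply: eq_bigr => i _; ring.
  rewrite -mulrDr => /eqP; rewrite mulf_eq0 (negbTE mu0) /=.
  have hpos : forall i : 'I_m, 0 < 2 * (Lf (r i x / mu ^+ 2) - r i x / mu ^+ 2 * th (r i x / mu ^+ 2)).
    move=> i; rewrite mulr_gt0 // subr_gt0; exact: th_lt_ln.
  have hq : 0 <= sqnorm x by rewrite /sqnorm sumr_ge0 // => k _; rewrite sqr_ge0.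
  have hs : 0 < \sum_(i < m) (2 * (Lf (r i x / mu ^+ 2) - r i x / mu ^+ 2 * th (r i x / mu ^+ 2))).
    rewrite (bigD1 (Ordinal hm)) //= ltr_pwDl ?hpos // sumr_ge0 // => i _.
    exact: ltW.
  by rewrite gt_eqF // ltr_wpDr.
split => //.
subst mu.
move: H; rewrite /subdiff0 eqxx /= => H.
have key : forall j, \sum_(i < m) Num.sg (r i x) * pderiv (r i) j x = 0.
  move=> j.
  set S := \sum_(i < m) _.
  set K := \sum_(i < m) `|pderiv (r i) j x| / `|r i x| + `|x 0 j|.
  apply/eqP; apply: contraT => S0.
  have e0 : 0 < `|S| / 2 by rewrite divr_gt0 // normr_gt0.
  have h1 : \forall t \near 0^', `|gradE1 r x t| < `|S| / 2.
    by apply: (cvgr0_norm_lt (fun t => gradE1 r x t)).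
  have h2 : \forall t \near (0:R)^', t != 0 by exact: nbhs_dnbhs_neq.
  have hc : (fun t : R => t ^+ 2 * K) @ 0^' --> 0.
    apply: (@cvg_to_0_linear _ _ `|K| 1) => // t /andP [ht0 ht1].
    rewrite normrM normrX mulrC ler_wpM2l // expr2 ler_piMr //.
    exact: ltW.
  have h3 : \forall t \near 0^', `|t ^+ 2 * K| < `|S| / 2.
    by apply: (cvgr0_norm_lt (fun t : R => t ^+ 2 * K)).
  have [t [[ht1 ht2] ht3]] := @filter_ex R (0:R)^' (Proper_dnbhs_numFieldType 0) _ (filterI (filterI h1 h2) h3).
  have hG := entry_le (gradE1 r x t).1 (gradE1 r x t).2 j.
  rewrite -surjective_pairing in hG.
  have hGE : (gradE1 r x t).1 0 j = \sum_(i < m) pderiv (r i) j x * th (r i x / t ^+ 2) + t ^+ 2 * x 0 j.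
    by rewrite /gradE1 /grad /= mxE pderiv_E1 // => i; exact: hder.
  have hb := grad_bound (fun i => pderiv (r i) j x) (fun i => r i x) (x 0 j) t ht2.
  rewrite -hGE /= -/S -/K in hb.
  set G := (gradE1 r x t).1 0 j in hG hb.
  have hS : `|S| <= `|G| + `|G - S|.
    have {1}-> : S = G - (G - S) by rewrite opprB addrC subrK.
    exact: ler_normB.
  have : `|S| < `|S| / 2 + `|S| / 2.
    apply: (le_lt_trans hS); rewrite ltrD //.
      exact: (le_lt_trans hG).
    by rewrite (le_lt_trans hb) // (le_lt_trans (ler_norm _)).
  by rewrite -splitr ltxx.
have stat : stationary r x.
  exists (fun i => Num.sg (r i x)); split => //; split.
    by move=> i ->; rewrite sgr0 lerN10 ler01.
  apply/rowP => j; rewrite summxE !mxE.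
  rewrite -[RHS](key j); apply: eq_bigr => i _; rewrite !mxE.
  by [].
split => // haff y.
rewrite /fobj.
have e1 : \sum_(i < m) `|r i x| = \sum_(i < m) Num.sg (r i x) * r i y.
  apply/eqP; rewrite -subr_eq0 -sumrB; apply/eqP.
  rewrite (eq_bigr (fun i => - (Num.sg (r i x) * (r i y - r i x)))); last first.
    by move=> i _; rewrite {1}[`|r i x|]normrEsg; ring.
  rewrite sumrN; apply/eqP; rewrite oppr_eq0; apply/eqP.
  under eq_bigr => i _ do rewrite (affine_diff _ (haff i) x y) mulr_sumr.
  rewrite exchange_big /=; apply: big1 => k _.
  rewrite (eq_bigr (fun i => Num.sg (r i x) * pderiv (r i) k x * (y 0 k - x 0 k))); last first.
    by move=> i _; rewrite mulrA.
  by rewrite -mulr_suml key mul0r.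
rewrite e1; apply: ler_sum => i _.
rewrite (le_trans (ler_norm _)) // normrM -[X in _ <= X]mul1r ler_wpM2r //.
by rewrite normr_sg; case: (r i x != 0).
Qed.
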